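(* Let $\Gamma$ be a finite simplicial graph with vertex set $V=\{a_0,\ldots,a_{n-1}\}$, let $M$ be a positive integer and $\sigma:B(M)\to A(\Gamma)$ the map defined in the context. For all $u,v\in V$ and $x,y\in B(M)$: (1) $xy^{-1}\in Z(u)$ if and only if $\sigma(x)\sigma(y)^{-1}\in Z(u)$; (2) $xy^{-1}\in Z(v)Z(u)$ if and only if $\sigma(x)\sigma(y)^{-1}\in Z(v)Z(u)$.
   Context: $A(\Gamma)=\langle V\mid[a,b]=1\text{ for }\{a,b\}\in E(\Gamma)\rangle$; $\|w\|$ is the word length with respect to $V$, and $B(M)=\{w\in A(\Gamma):\|w\|\le M\}$. For $v\in V$, $Z(v)=\langle\mathrm{st}_\Gamma(v)\rangle$, the subgroup generated by $v$ and its neighbours, and $Z(v)Z(u)=\{gh:g\in Z(v),h\in Z(u)\}$. For a word $s_1^{e_1}\cdots s_\ell^{e_\ell}$ ($s_i\in V$, $e_i\in\{\pm1\}$, $\ell=\|w\|$) representing $w\in B(M)$, its right-counting vector $(f_1,\ldots,f_\ell)$ has $f_i=\min\|y\|$ over $y\in A(\Gamma)$ with $s_i^{e_i}\cdots s_\ell^{e_\ell}=x\,s_i^{e_i}\,y$ for some $x\in\langle\mathrm{lk}_\Gamma(s_i)\rangle$ ($\mathrm{lk}_\Gamma(s)$ = vertices adjacent to $s$). Set $N_i=\frac{3e_i-1}{2}\cdot4^{M-1-f_i}$ and $\sigma(w)=s_1^{N_1}\cdots s_\ell^{N_\ell}$; this is independent of the chosen word of length $\|w\|$ representing $w$. *)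

(* Defs.v *)
From mathcomp Require Import all_boot all_order all_algebra.
From mathcomp Require Import boolp.
Set Implicit Arguments. Unset Strict Implicit. Unset Printing Implicit Defensive.

(* Right-angled Artin group A(Gamma), Gamma a finite simplicial graph on the
   vertex set 'I_n given by a symmetric irreflexive relation adj.
   Elements of A(Gamma) are represented by words in V^{+-1}:
   a letter (s, true) is s, a letter (s, false) is s^{-1}. *)
Definition letter (n : nat) := ('I_n * bool)%type.
Definition word (n : nat) := seq (letter n).

Inductive weq (n : nat) (adj : rel 'I_n) : word n -> word n -> Prop :=
| weq_refl w : weq adj w w
| weq_sym w1 w2 : weq adj w1 w2 -> weq adj w2 w1
| weq_trans w1 w2 w3 : weq adj w1 w2 -> weq adj w2 w3 -> weq adj w1 w3
| weq_ctx p q w1 w2 : weq adj w1 w2 -> weq adj (p ++ w1 ++ q) (p ++ w2 ++ q)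
| weq_free (s : 'I_n) (e : bool) : weq adj [:: (s, e); (s, ~~ e)] [::]
| weq_comm (a b : 'I_n) (e f : bool) :
    adj a b -> weq adj [:: (a, e); (b, f)] [:: (b, f); (a, e)].

Definition winv (n : nat) (w : word n) : word n :=
  rev (map (fun l => (l.1, ~~ l.2)) w).

(* minimum of a (classical) set of naturals; 0 if empty *)
Lemma ex_asbool (P : nat -> Prop) :
  (exists k, P k) -> exists k, (fun k => `[< P k >]) k.
Proof. by case=> k hk; exists k; apply/asboolP. Qed.

Definition nmin (P : nat -> Prop) : nat :=
  match pselect (exists k, P k) with
  | left h => @ex_minn (fun k => `[< P k >]) (ex_asbool h)
  | right _ => 0
  end.

Definition wlen (n : nat) (adj : rel 'I_n) (w : word n) : nat :=
  nmin (fun k => exists w', weq adj w w' /\ size w' = k).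

Definition in_sub (n : nat) (adj : rel 'I_n) (S : pred 'I_n) (w : word n) : Prop :=
  exists w', weq adj w w' /\ all (fun l => S l.1) w'.

Definition star (n : nat) (adj : rel 'I_n) (v : 'I_n) : pred 'I_n :=
  fun u => (u == v) || adj v u.
Definition inZ (n : nat) (adj : rel 'I_n) (v : 'I_n) (w : word n) : Prop :=
  in_sub adj (star adj v) w.
Definition inZZ (n : nat) (adj : rel 'I_n) (v u : 'I_n) (w : word n) : Prop :=
  exists g h, inZ adj v g /\ inZ adj u h /\ weq adj w (g ++ h).

(* f_i for the letter l = s_i^{e_i}, with t = s_i^{e_i} ... s_l^{e_l} the suffix:
   min ||y|| over y with t = x s_i^{e_i} y, x in <lk(s_i)>. *)
Definition fval (n : nat) (adj : rel 'I_n) (l : letter n) (t : word n) : nat :=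
  nmin (fun m => exists x y : word n,
          weq adj t (x ++ l :: y) /\ in_sub adj (adj l.1) x /\ wlen adj y = m).

Definition sgn (e : bool) : int := if e then 1%R else (-1)%R.
Definition Nexp (M : nat) (e : bool) (f : nat) : int :=
  (divz (3 * sgn e - 1)%R 2 * (4 ^ (M - 1 - f))%:Z)%R.

Definition wpow (n : nat) (s : 'I_n) (z : int) : word n :=
  match z with
  | Posz k => nseq k (s, true)
  | Negz k => nseq k.+1 (s, false)
  end.

Fixpoint sigma (n : nat) (adj : rel 'I_n) (M : nat) (w : word n) : word n :=
  match w with
  | [::] => [::]
  | l :: r => wpow l.1 (Nexp M l.2 (fval adj l (l :: r))) ++ sigma adj M r
  end.

(* Main.v *)
Require Import Defs.
From mathcomp Require Import all_boot all_order all_algebra.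
From mathcomp Require Import boolp.
Set Implicit Arguments. Unset Strict Implicit. Unset Printing Implicit Defensive.

Lemma Nexp_true M f : Nexp M true f = Posz (4 ^ (M - 1 - f)).
Proof.
rewrite /Nexp /sgn.
have -> : divz (3 * 1 - 1)%R 2 = 1%R by [].
by rewrite GRing.mul1r.
Qed.
Lemma Nexp_false M f : Nexp M false f = Negz (2 * 4 ^ (M - 1 - f)).-1.
Proof.
rewrite /Nexp /sgn.
have -> : divz (3 * (-1) - 1)%R 2 = (-2)%R by [].
rewrite NegzE prednK ?muln_gt0 ?expn_gt0 // PoszM GRing.mulNr.
by [].
Qed.

Lemma nmin_le (P : nat -> Prop) k : P k -> nmin P <= k.
Proof.
move=> hk; rewrite /nmin; case: pselect => [h|[]]; last by exists k.
case: ex_minnP => m _ hm; apply: hm; exact/asboolP.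
Qed.

Section Raag.
Variable n : nat.
Variable adj : rel 'I_n.
Hypothesis adj_sym : symmetric adj.
Hypothesis adj_irr : irreflexive adj.

Local Notation word := (word n).
Local Notation letter := (letter n).
Local Notation weq := (weq adj).

Lemma weq_catl p w1 w2 : weq w1 w2 -> weq (p ++ w1) (p ++ w2).
Proof. by move=> h; have := weq_ctx p [::] h; rewrite !cats0. Qed.
Lemma weq_catr q w1 w2 : weq w1 w2 -> weq (w1 ++ q) (w2 ++ q).
Proof. by move=> h; have := weq_ctx [::] q h. Qed.
Lemma weq_cat w1 w2 v1 v2 : weq w1 w2 -> weq v1 v2 -> weq (w1 ++ v1) (w2 ++ v2).
Proof.
move=> h1 h2; apply: weq_trans (weq_catr _ h1) _; exact: weq_catl.
Qed.

Inductive shuf : word -> word -> Prop :=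
| sh_refl w : shuf w w
| sh_trans w1 w2 w3 : shuf w1 w2 -> shuf w2 w3 -> shuf w1 w3
| sh_swap p q a b : adj a.1 b.1 -> shuf (p ++ a :: b :: q) (p ++ b :: a :: q).

Lemma shuf_sym w1 w2 : shuf w1 w2 -> shuf w2 w1.
Proof.
elim=> [w|w1' w2' w3 _ h1 _ h2|p q a b hab]; first exact: sh_refl.
  exact: sh_trans h2 h1.
by apply: sh_swap; rewrite adj_sym.
Qed.

Lemma shuf_weq w1 w2 : shuf w1 w2 -> weq w1 w2.
Proof.
elim=> [w|w1' w2' w3 _ h1 _ h2|p q a b hab]; first exact: weq_refl.
  exact: weq_trans h1 h2.
have := weq_ctx p q (weq_comm a.2 b.2 hab).
by case: a {hab} => ??; case: b => ??.
Qed.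

Lemma shuf_catl p w1 w2 : shuf w1 w2 -> shuf (p ++ w1) (p ++ w2).
Proof.
elim=> [w|w1' w2' w3 _ h1 _ h2|p' q a b hab]; first exact: sh_refl.
  exact: sh_trans h1 h2.
by rewrite !catA; apply: sh_swap.
Qed.

Lemma shuf_catr q w1 w2 : shuf w1 w2 -> shuf (w1 ++ q) (w2 ++ q).
Proof.
elim=> [w|w1' w2' w3 _ h1 _ h2|p' q' a b hab]; first exact: sh_refl.
  exact: sh_trans h1 h2.
by rewrite -!catA /=; apply: sh_swap.
Qed.

Lemma shuf_cat w1 w2 v1 v2 : shuf w1 w2 -> shuf v1 v2 -> shuf (w1 ++ v1) (w2 ++ v2).
Proof. move=> h1 h2; apply: sh_trans (shuf_catr _ h1) _; exact: shuf_catl. Qed.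

Lemma shuf_perm w1 w2 : shuf w1 w2 -> perm_eq w1 w2.
Proof.
elim=> [w|w1' w2' w3 _ h1 _ h2|p q a b hab]; first exact: perm_refl.
  exact: perm_trans h1 h2.
rewrite perm_cat2l -[a :: b :: q]/([:: a; b] ++ q) -[b :: a :: q]/([:: b; a] ++ q).
by rewrite perm_cat2r; apply/permP=> P /=; rewrite !addnA [(P a + _)%N]addnC.
Qed.

Lemma shuf_size w1 w2 : shuf w1 w2 -> size w1 = size w2.
Proof. by move/shuf_perm/perm_size. Qed.

Lemma shuf_all (P : pred letter) w1 w2 : shuf w1 w2 -> all P w1 = all P w2.
Proof. by move/shuf_perm/perm_all. Qed.

Lemma shuf_move l w : all (fun m => adj l.1 m.1) w -> shuf (l :: w) (w ++ [:: l]).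
Proof.
elim: w => [|m w IH] /=; first by move=> _; apply: sh_refl.
case/andP=> hm hw; apply: sh_trans (sh_swap [::] w hm) _ => /=.
exact: (shuf_catl [:: m] (IH hw)).
Qed.

Lemma shuf_comm w1 w2 :
  all (fun l => all (fun m => adj l.1 m.1) w2) w1 -> shuf (w1 ++ w2) (w2 ++ w1).
Proof.
elim: w1 => [|l w1 IH] /=; first by move=> _; rewrite cats0; apply: sh_refl.
case/andP=> hl hw.
apply: sh_trans (shuf_catl [:: l] (IH hw)) _ => /=.
by have := shuf_catr w1 (shuf_move hl); rewrite -catA.
Qed.


Definition pile := {ffun 'I_n -> seq (option bool)}.
Definition P0 : pile := [ffun _ => [::]].
Definition top (P : pile) t : option bool := head None (P t).
Definition push (l : letter) (P : pile) : pile :=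
  [ffun t => if t == l.1 then Some l.2 :: P t
             else if ~~ adj l.1 t then None :: P t else P t].
Definition pop (s : 'I_n) (P : pile) : pile :=
  [ffun t => if (t == s) || ~~ adj s t then behead (P t) else P t].
Definition act (l : letter) (P : pile) : pile :=
  if top P l.1 == Some (~~ l.2) then pop l.1 P else push l P.
Definition Hf (P : pile) (w : word) := foldl (fun Q l => push l Q) P w.
Definition H w := Hf P0 w.
Definition fa (P : pile) (w : word) := foldl (fun Q l => act l Q) P w.
Definition pileof w := fa P0 w.

Lemma Hf_cat P w1 w2 : Hf P (w1 ++ w2) = Hf (Hf P w1) w2.
Proof. exact: foldl_cat. Qed.
Lemma H_rcons w l : H (rcons w l) = push l (H w).
Proof. by rewrite /H -cats1 Hf_cat. Qed.
Lemma H_cat w1 w2 : H (w1 ++ w2) = Hf (H w1) w2.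
Proof. exact: Hf_cat. Qed.
Lemma fa_cat P w1 w2 : fa P (w1 ++ w2) = fa (fa P w1) w2.
Proof. exact: foldl_cat. Qed.
Lemma fa_rcons P w l : fa P (rcons w l) = act l (fa P w).
Proof. by rewrite -cats1 fa_cat. Qed.

Lemma adj_neq a b : adj a b -> a != b.
Proof. by apply: contraTneq => ->; rewrite adj_irr. Qed.

Lemma top_push l P t :
  top (push l P) t = if t == l.1 then Some l.2 else if ~~ adj l.1 t then None else top P t.
Proof. by rewrite /top ffunE; case: eqP => //; case: adj. Qed.

Lemma pop_push l P : pop l.1 (push l P) = P.
Proof.
apply/ffunP=> t; rewrite !ffunE; case: (eqVneq t l.1) => [->|ht] //=.
by case: adj.
Qed.

Lemma push_comm a b P : adj a.1 b.1 -> push a (push b P) = push b (push a P).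
Proof.
move=> hab; have hba : adj b.1 a.1 by rewrite adj_sym.
apply/ffunP=> t; rewrite !ffunE.
case: (eqVneq t a.1) => [->|ta]; first by rewrite (negbTE (adj_neq hab)) hba.
case: (eqVneq t b.1) => [->|tb]; first by rewrite hab.
by case: (adj a.1 t); case: (adj b.1 t).
Qed.

Lemma pop_comm s t P : pop s (pop t P) = pop t (pop s P).
Proof.
by apply/ffunP=> u; rewrite !ffunE; do !case: ifP.
Qed.

Lemma H_shuf w1 w2 : shuf w1 w2 -> H w1 = H w2.
Proof.
elim=> [w|w1' w2' w3 _ h1 _ h2|p q a b hab]; [by [] | by rewrite h1 h2 |].
by rewrite !H_cat /Hf /= (push_comm _ hab).
Qed.

Lemma top_H_rcons w l : top (H (rcons w l)) l.1 = Some l.2.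
Proof. by rewrite H_rcons top_push eqxx. Qed.

Lemma top_piece w s e : top (H w) s = Some e -> exists w', shuf w (rcons w' (s, e)).
Proof.
elim/last_ind: w => [|w l IH]; first by rewrite /top /H /= ffunE.
rewrite H_rcons top_push; case: eqP => [hs [he]|hs].
  by exists w; rewrite hs -he; case: l {hs he} => ??; apply: sh_refl.
case hadj: (adj l.1 s) => //= /IH [w' hw'].
exists (rcons w' l); rewrite -!cats1.
apply: sh_trans (shuf_catr _ hw') _; rewrite -cats1 -!catA /=.
by apply: (sh_swap w' [::]); rewrite /= adj_sym.
Qed.

Lemma top_piece_cat p q s e : top (H (p ++ q)) s = Some e ->
  (exists q', shuf q (rcons q' (s, e))) \/
  (exists p', shuf p (rcons p' (s, e)) /\ all (fun l => adj s l.1) q).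
Proof.
elim/last_ind: q => [|q l IH].
  by rewrite cats0 => /top_piece [p' hp]; right; exists p'.
rewrite -rcons_cat H_rcons top_push; case: eqP => [hs [he]|hs].
  by left; exists q; rewrite hs -he; case: l {hs he} => ??; apply: sh_refl.
case hadj: (adj l.1 s) => //= /IH [[q' hq']|[p' [hp hq]]].
  left; exists (rcons q' l); rewrite -!cats1.
  apply: sh_trans (shuf_catr _ hq') _; rewrite -cats1 -!catA /=.
  by apply: (sh_swap q' [::]); rewrite /= adj_sym.
by right; exists p'; split => //; rewrite all_rcons hq andbT adj_sym.
Qed.

Lemma H_nil_inv w : H w = P0 -> w = [::].
Proof.
case/lastP: w => // w l /(congr1 (fun P => top P l.1)).
by rewrite top_H_rcons /top ffunE.
Qed.

Lemma H_inj w1 w2 : H w1 = H w2 -> shuf w1 w2.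
Proof.
move: {2}(size w1) (leqnn (size w1)) => k; elim: k w1 w2 => [|k IH] w1 w2.
  rewrite leqn0 => /nilP -> /esym /H_nil_inv ->; exact: sh_refl.
case/lastP: w1 => [_ /esym /H_nil_inv ->|w1 l]; first exact: sh_refl.
rewrite size_rcons ltnS => hk h12.
have := top_H_rcons w1 l; rewrite h12 => /top_piece [w2' hw2].
have /(congr1 (pop l.1)) : H (rcons w1 l) = H (rcons w2' (l.1, l.2)).
  by rewrite h12; exact: H_shuf.
rewrite !H_rcons (pop_push l) (pop_push (l.1, l.2)) => /(IH _ _ hk) h.
case: l h hw2 {h12} => a b /= h hw2.
by apply: sh_trans (shuf_sym hw2); rewrite -!cats1; apply: shuf_catr.
Qed.

Fixpoint vf (P : pile) (w : word) : bool :=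
  match w with
  | [::] => true
  | l :: r => (top P l.1 != Some (~~ l.2)) && vf (push l P) r
  end.

Lemma vf_cat P w1 w2 : vf P (w1 ++ w2) = vf P w1 && vf (Hf P w1) w2.
Proof. by elim: w1 P => //= l w1 IH P; rewrite IH andbA. Qed.

Lemma vf_rcons P w l : vf P (rcons w l) = vf P w && (top (Hf P w) l.1 != Some (~~ l.2)).
Proof. by rewrite -cats1 vf_cat /= andbT. Qed.

Lemma top_push_adj a P t : adj a.1 t -> top (push a P) t = top P t.
Proof. by move=> h; rewrite top_push h eq_sym (negbTE (adj_neq h)). Qed.

Lemma vf_shuf w1 w2 : shuf w1 w2 -> forall P, vf P w1 = vf P w2.
Proof.
elim=> [w|w1' w2' w3 _ h1 _ h2|p q a b hab] P; first by [].
  by rewrite h1 h2.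
rewrite !vf_cat /=; set Q := Hf P p.
have hba : adj b.1 a.1 by rewrite adj_sym.
rewrite (top_push_adj _ hab) (top_push_adj _ hba) (push_comm _ hab).
by congr (_ && _); rewrite !andbA; congr (_ && _); rewrite andbC.
Qed.

Lemma vf_prefix P w1 w2 : vf P (w1 ++ w2) -> vf P w1.
Proof. by rewrite vf_cat => /andP []. Qed.

Definition valid w := vf P0 w.

Lemma weq_inv_r l : weq [:: (l.1, ~~ l.2); l] [::].
Proof. by have := weq_free adj l.1 (~~ l.2); rewrite negbK; case: l. Qed.

Lemma reduce w0 u : valid w0 -> exists w,
  [/\ fa (H w0) u = H w, valid w, weq (w0 ++ u) w,
      (w = w0 ++ u \/ size w < size w0 + size u) &
      forall P : pred letter, all P (w0 ++ u) -> all P w].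
Proof.
move=> v0; elim/last_ind: u => [|u l [w [hf hv hq hs ha]]].
  by exists w0; rewrite cats0; split => //; [exact: weq_refl | left].
rewrite fa_rcons hf /act; case: eqP => [htop|htop].
  have [w' hw'] := top_piece htop.
  have hH : H w = push (l.1, ~~ l.2) (H w') by rewrite (H_shuf hw') H_rcons.
  have hv' : valid w'.
    by move: hv; rewrite /valid (vf_shuf hw') -cats1 => /vf_prefix.
  exists w'; split => //.
  - by rewrite hH; have := pop_push (l.1, ~~ l.2) (H w').
  - rewrite -rcons_cat -cats1; apply: weq_trans (weq_catr _ hq) _.
    apply: weq_trans (weq_catr _ (shuf_weq hw')) _.
    rewrite -cats1 -catA /=; have := weq_catl w' (weq_inv_r l).
    by rewrite cats0.
  - right; have e := shuf_size hw'; rewrite size_rcons in e.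
    rewrite size_rcons addnS ltnS; apply: ltnW; rewrite -e.
    by case: hs => [->|/ltnW //]; rewrite size_cat.
  - move=> P; rewrite -rcons_cat all_rcons => /andP [_ /ha].
    by rewrite (shuf_all _ hw') all_rcons => /andP [].
exists (rcons w l); split.
- by rewrite H_rcons.
- by rewrite /valid vf_rcons; apply/andP; split => //; apply/eqP.
- by rewrite -!cats1 catA; exact: weq_catr.
- rewrite size_rcons size_rcons addnS ltnS -rcons_cat.
  by case: hs => [->|]; [left | right].
- by move=> P; rewrite -rcons_cat !all_rcons => /andP [-> /ha].
Qed.

Lemma act_pop l P : top P l.1 = Some (~~ l.2) -> act l P = pop l.1 P.
Proof. by rewrite /act => ->; rewrite eqxx. Qed.
Lemma act_push l P : top P l.1 != Some (~~ l.2) -> act l P = push l P.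
Proof. by rewrite /act => /negbTE ->. Qed.

Lemma valid_rcons_top w l : valid (rcons w l) -> top (H w) l.1 != Some (~~ l.2).
Proof. by rewrite /valid vf_rcons => /andP []. Qed.

Lemma act_inv w s e : valid w -> act (s, ~~ e) (act (s, e) (H w)) = H w.
Proof.
move=> hv; case: (eqVneq (top (H w) s) (Some (~~ e))) => [htop|htop].
  have [w' hw'] := top_piece htop.
  have hH : H w = push (s, ~~ e) (H w') by rewrite (H_shuf hw') H_rcons.
  rewrite (act_pop (l := (s, e))) //= {1}hH.
  have -> := pop_push (s, ~~ e) (H w'); rewrite act_push // negbK.
  have := hv; rewrite /valid (vf_shuf hw') => /valid_rcons_top /=.
  by rewrite negbK.
rewrite (act_push (l := (s, e))) // act_pop /=.
  by have -> := pop_push (s, e) (H w).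
by rewrite top_push eqxx negbK.
Qed.

Lemma top_act_adj b P t : adj b.1 t -> top (act b P) t = top P t.
Proof.
move=> h; rewrite /act; case: ifP => _; last exact: top_push_adj.
by rewrite /top ffunE eq_sym (negbTE (adj_neq h)) h.
Qed.

Lemma mixed w a b : adj a.1 b.1 -> top (H w) a.1 = Some (~~ a.2) ->
  pop a.1 (push b (H w)) = push b (pop a.1 (H w)).
Proof.
move=> hab htop; have [w' hw'] := top_piece htop.
have hH : H w = push (a.1, ~~ a.2) (H w') by rewrite (H_shuf hw') H_rcons.
rewrite hH -push_comm /=; last by [].
by rewrite !(pop_push (a.1, ~~ a.2)).

Qed.

Lemma act_comm w a b : adj a.1 b.1 ->
  act a (act b (H w)) = act b (act a (H w)).
Proof.
move=> hab; have hba : adj b.1 a.1 by rewrite adj_sym.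
rewrite /act (top_act_adj _ hba) (top_act_adj _ hab).
case: eqP => ha; case: eqP => hb.
- exact: pop_comm.
- by rewrite (mixed hab ha).
- by rewrite (mixed hba hb).
- exact: push_comm.
Qed.

Lemma valid_nil : valid [::]. Proof. by []. Qed.

Lemma fa_weq u1 u2 : weq u1 u2 -> forall w, valid w -> fa (H w) u1 = fa (H w) u2.
Proof.
elim=> {u1 u2}.
- by [].
- by move=> w1 w2 _ IH w hv; rewrite IH.
- by move=> w1 w2 w3 _ IH1 _ IH2 w hv; rewrite IH1 // IH2.
- move=> p q w1 w2 _ IH w hv; rewrite !fa_cat.
  have [w' [-> hv' _ _ _]] := reduce p hv; by rewrite IH.
- by move=> s e w hv /=; rewrite act_inv.
- move=> a b e f hab w hv /=.
  by have := act_comm w (a := (b, f)) (b := (a, e)); rewrite /= adj_sym => ->.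
Qed.

Lemma pile_weq u1 u2 : weq u1 u2 -> pileof u1 = pileof u2.
Proof. by move=> h; apply: (fa_weq h valid_nil). Qed.

Lemma weq_of_pile u1 u2 : pileof u1 = pileof u2 -> weq u1 u2.
Proof.
have [w1 [h1 _ q1 _ _]] := reduce u1 valid_nil.
have [w2 [h2 _ q2 _ _]] := reduce u2 valid_nil.
rewrite /pileof -/(H [::]) h1 h2 => /H_inj /shuf_weq h.
exact: weq_trans q1 (weq_trans h (weq_sym q2)).
Qed.

Lemma valid_pile w : valid w -> pileof w = H w.
Proof.
elim/last_ind: w => // w l IH hv.
rewrite /pileof fa_rcons -/(pileof w) IH; last by move: hv; rewrite /valid vf_rcons => /andP [].
by rewrite act_push ?H_rcons // valid_rcons_top.
Qed.

Definition geod u := forall w, weq u w -> size u <= size w.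

Lemma geod_valid u : geod u -> valid u.
Proof.
move=> hg; have [w [_ hv hq hs _]] := reduce u valid_nil.
case: hs => [/= <- //|]; by rewrite /= ltnNge (hg _ hq).
Qed.

Lemma geod_suffix p u : geod (p ++ u) -> geod u.
Proof.
move=> hg w hw; have := hg _ (weq_catl p hw).
by rewrite !size_cat leq_add2l.
Qed.

Definition split (T S : pred 'I_n) (w : word) :=
  exists w1 w2, [/\ shuf w (w1 ++ w2), all (fun l => T l.1) w1 & all (fun l => S l.1) w2].

Lemma proc (T S : pred 'I_n) h0 : all (fun l => S l.1) h0 ->
  forall g' h', all (fun l => T l.1) g' -> all (fun l => S l.1) h' ->
  exists g'' h'', [/\ fa (H (g' ++ h')) h0 = H (g'' ++ h''),
                      all (fun l => T l.1) g'' & all (fun l => S l.1) h''].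
Proof.
elim: h0 => [_ g' h' hg hh|l h0 IH /= /andP [hl hh0] g' h' hg hh].
  by exists g', h'.
suff [g2 [h2 [-> hg2 hh2]]] : exists g2 h2, [/\ act l (H (g' ++ h')) = H (g2 ++ h2),
    all (fun l => T l.1) g2 & all (fun l => S l.1) h2].
  exact: IH.
case: (eqVneq (top (H (g' ++ h')) l.1) (Some (~~ l.2))) => [htop|htop]; last first.
  exists g', (rcons h' l); rewrite act_push // -rcons_cat H_rcons.
  by split => //; rewrite all_rcons hl.
rewrite act_pop //.
case: (top_piece_cat htop) => [[q' hq]|[p' [hp ha]]].
  exists g', q'; split.
  - have -> : H (g' ++ h') = push (l.1, ~~ l.2) (H (g' ++ q')).
      by rewrite (H_shuf (shuf_catl g' hq)) -rcons_cat H_rcons.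
    by have -> := pop_push (l.1, ~~ l.2) (H (g' ++ q')).
  - by [].
  - by move: hh; rewrite (shuf_all _ hq) all_rcons => /andP [].
exists p', h'; split => //.
- have -> : H (g' ++ h') = push (l.1, ~~ l.2) (H (p' ++ h')).
    rewrite (H_shuf (shuf_catr h' hp)) -H_rcons; apply: H_shuf.
    rewrite cat_rcons rcons_cat -cats1; apply: shuf_catl.
    exact: shuf_move.
  by have -> := pop_push (l.1, ~~ l.2) (H (p' ++ h')).
- by move: hg; rewrite (shuf_all _ hp) all_rcons => /andP [].
Qed.

Lemma split_of (T S : pred 'I_n) w : valid w ->
  (exists g h, [/\ in_sub adj T g, in_sub adj S h & weq w (g ++ h)]) -> split T S w.
Proof.
move=> hv [g [h [[g0 [hg0 ag0]] [h0 [hh0 ah0]] hw]]].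
have hw' : weq w (g0 ++ h0) by apply: weq_trans hw (weq_cat hg0 hh0).
have [g1 [hf1 _ _ _ ha1]] := reduce g0 valid_nil.
have [g'' [h'' [hf ag ah]]] := proc ah0 (ha1 _ ag0) (isT : all (fun l => S l.1) [::]).
exists g'', h''; split => //; apply: H_inj.
rewrite -valid_pile // (pile_weq hw') /pileof fa_cat -/(H [::]) hf1.
by rewrite -hf cats0.
Qed.

Lemma split_in T S w : split T S w ->
  exists g h, [/\ in_sub adj T g, in_sub adj S h & weq w (g ++ h)].
Proof.
case=> [w1 [w2 [hs a1 a2]]]; exists w1, w2; split.
- by exists w1; split => //; exact: weq_refl.
- by exists w2; split => //; exact: weq_refl.
- exact: shuf_weq.
Qed.

Lemma split_shuf T S w1 w2 : shuf w1 w2 -> split T S w1 -> split T S w2.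
Proof.
move=> h [v1 [v2 [hs a1 a2]]]; exists v1, v2; split => //.
exact: sh_trans (shuf_sym h) hs.
Qed.

Lemma inZZ_split v u w : valid w -> (inZZ adj v u w <-> split (star adj v) (star adj u) w).
Proof.
move=> hv; split.
  case=> g [h [hg [hh hw]]]; apply: split_of => //; by exists g, h.
by move/split_in => [g [h [hg hh hw]]]; exists g, h.
Qed.

Lemma inZ_all u w : valid w -> (inZ adj u w <-> all (fun l => star adj u l.1) w).
Proof.
move=> hv; split; last by move=> ha; exists w; split => //; exact: weq_refl.
move=> hz; have [] := @split_of (star adj u) (star adj u) w hv.
  exists w, [::]; split => //; first by exists [::]; split => //; exact: weq_refl.
  by rewrite cats0; exact: weq_refl.
move=> w1 [w2 [hs a1 a2]]; by rewrite (shuf_all _ hs) all_cat a1 a2.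
Qed.

Inductive Exp : word -> word -> Prop :=
| Exp_nil : Exp [::] [::]
| Exp_cons l k w w' : Exp w w' -> Exp (l :: w) (nseq k.+1 l ++ w').

Lemma Exp_cat w1 w1' w2 w2' : Exp w1 w1' -> Exp w2 w2' -> Exp (w1 ++ w2) (w1' ++ w2').
Proof.
elim=> [//|l k u u' _ IH] h2 /=.
by rewrite -catA; apply: Exp_cons; exact: IH.
Qed.

Lemma Exp_all (P : pred letter) w w' : Exp w w' -> all P w = all P w'.
Proof.
elim=> [//|l k u u' _ IH]; rewrite [in RHS]all_cat all_nseq /= IH.
by [].
Qed.

Lemma winv_cat (w1 w2 : word) : winv (w1 ++ w2) = winv w2 ++ winv w1.
Proof. by rewrite /winv map_cat rev_cat. Qed.
Lemma winv_cons (l : letter) w : winv (l :: w) = winv w ++ [:: (l.1, ~~ l.2)].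
Proof. by rewrite -cat1s winv_cat. Qed.
Lemma winv_nseq k (l : letter) : winv (nseq k l) = nseq k (l.1, ~~ l.2).
Proof. by rewrite /winv map_nseq rev_nseq. Qed.

Lemma Exp_winv w w' : Exp w w' -> Exp (winv w) (winv w').
Proof.
elim=> [|l k u u' _ IH]; first exact: Exp_nil; rewrite winv_cons winv_cat winv_nseq.
have := Exp_cons (l.1, ~~ l.2) k Exp_nil; rewrite cats0 => h.
exact: Exp_cat IH h.
Qed.

Lemma Exp_nil_inv w' : Exp [::] w' -> w' = [::].
Proof. by move=> h; inversion h. Qed.

Lemma Exp_cons_inv l0 u u' : Exp (l0 :: u) u' ->
  exists k W, u' = nseq k.+1 l0 ++ W /\ Exp u W.
Proof. move=> h; inversion h as [|l1 k1 u1 W1 hW]; subst; by exists k1, W1. Qed.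

Lemma Exp_cat_inv p r w' : Exp (p ++ r) w' ->
  exists P' R', [/\ w' = P' ++ R', Exp p P' & Exp r R'].
Proof.
elim: p w' => [|l p IH] w' /=; first by move=> h; exists [::], w'; split => //; exact: Exp_nil.
case/Exp_cons_inv=> k [W [-> /IH [P' [R' [-> hP hR]]]]].
by exists (nseq k.+1 l ++ P'), R'; split; [rewrite catA | exact: Exp_cons |].
Qed.

Definition heq (P Q : pile) := forall t, top P t = top Q t.

Lemma heq_push l P Q : heq P Q -> heq (push l P) (push l Q).
Proof. by move=> h t; rewrite !top_push h. Qed.

Lemma heq_push2 l P : heq (push l (push l P)) (push l P).
Proof. by move=> t; rewrite !top_push; case: eqP => //; case: adj. Qed.

Lemma Hf_nseq k l P : heq (Hf P (nseq k.+1 l)) (push l P).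
Proof.
elim: k P => [//|k IH] P t /=.
rewrite -/(Hf (push l (push l P)) (nseq k.+1 l)).
have := IH (push l P) t; rewrite /= => ->; exact: heq_push2.
Qed.

Lemma vf_heq w P Q : heq P Q -> vf P w = vf Q w.
Proof.
elim: w P Q => [//|l w IH] P Q h /=; rewrite h; congr (_ && _).
by apply: IH; exact: heq_push.
Qed.

Lemma vf_cons P l w : vf P (l :: w) = (top P l.1 != Some (~~ l.2)) && vf (push l P) w.
Proof. by []. Qed.

Lemma vf_nseq k l P : vf P (nseq k.+1 l) = (top P l.1 != Some (~~ l.2)).
Proof.
elim: k P => [|k IH] P; first by rewrite /= andbT.
have -> : nseq k.+2 l = l :: nseq k.+1 l by [].
rewrite vf_cons IH top_push eqxx.
by case: (l.2) => /=; rewrite andbT.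
Qed.

Lemma Exp_heq w w' : Exp w w' -> forall P Q, heq P Q -> heq (Hf P w) (Hf Q w').
Proof.
elim=> [//|l k u u' _ IH] P Q h /=.
rewrite Hf_cat; apply: IH => t.
by rewrite Hf_nseq; apply: heq_push.
Qed.

Lemma Exp_vf w w' : Exp w w' -> forall P Q, heq P Q -> vf P w -> vf Q w'.
Proof.
elim=> [//|l k u u' _ IH] P Q h; rewrite vf_cons => /andP [h1 h2].
rewrite vf_cat vf_nseq -h h1 /=; apply: IH h2 => t.
by rewrite Hf_nseq; apply: heq_push.
Qed.

Lemma Exp_valid w w' : Exp w w' -> valid w -> valid w'.
Proof. by move=> h; apply: Exp_vf. Qed.

Lemma Exp_shuf w v : shuf w v -> forall w', Exp w w' -> exists v', Exp v v' /\ shuf w' v'.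
Proof.
elim=> [w0 w' h|w1 w2 w3 _ IH1 _ IH2 w' h|p q a b hab w' h].
- by exists w'; split => //; exact: sh_refl.
- have [v1 [h1 s1]] := IH1 _ h; have [v2 [h2 s2]] := IH2 _ h1.
  by exists v2; split => //; exact: sh_trans s1 s2.
case/Exp_cat_inv: h => P' [R' [-> hP]].
case/Exp_cons_inv => ka [W [-> /Exp_cons_inv [kb [Q' [-> hQ]]]]].
exists (P' ++ nseq kb.+1 b ++ nseq ka.+1 a ++ Q'); split.
  by apply: Exp_cat hP _; apply: Exp_cons; apply: Exp_cons.
apply: shuf_catl; rewrite !catA; apply: shuf_catr; apply: shuf_comm.
by apply/allP => x /nseqP [-> _]; apply/allP => y /nseqP [-> _].
Qed.

Lemma split_peel (T S : pred 'I_n) w w0 s e : shuf w (rcons w0 (s, e)) -> S s ->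
  (split T S w <-> split T S w0).
Proof.
move=> hw hs; split; last first.
  case=> w1 [w2 [h0 a1 a2]]; exists w1, (rcons w2 (s, e)); split => //.
  - apply: sh_trans hw _; rewrite -rcons_cat -!cats1; exact: shuf_catr.
  - by rewrite all_rcons hs.
case=> w1 [w2 [h12 a1 a2]].
have hH : H (rcons w0 (s, e)) = H (w1 ++ w2).
  by rewrite -(H_shuf hw) (H_shuf h12).
have := top_H_rcons w0 (s, e); rewrite hH /= => /top_piece_cat.
case=> [[q' hq]|[p' [hp ha]]].
  exists w1, q'; split => //; last by move: a2; rewrite (shuf_all _ hq) all_rcons => /andP [].
  apply: H_inj; move: hH; rewrite (H_shuf (shuf_catl w1 hq)) -rcons_cat !H_rcons.
  by move/(congr1 (pop s)); rewrite !(pop_push (s, e)).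
exists p', w2; split => //; last by move: a1; rewrite (shuf_all _ hp) all_rcons => /andP [].
apply: H_inj; move: hH; rewrite (H_shuf (shuf_catr w2 hp)).
have -> : H (rcons p' (s, e) ++ w2) = H (rcons (p' ++ w2) (s, e)).
  apply: H_shuf; rewrite cat_rcons rcons_cat -cats1; apply: shuf_catl.
  exact: shuf_move.
by rewrite !H_rcons => /(congr1 (pop s)); rewrite !(pop_push (s, e)).
Qed.

Lemma split_noS (T S : pred 'I_n) w : (forall w0 l, shuf w (rcons w0 l) -> ~~ S l.1) ->
  (split T S w <-> all (fun l => T l.1) w).
Proof.
move=> hn; split; last first.
  by move=> ha; exists w, [::]; split => //; rewrite cats0; exact: sh_refl.
case=> w1 [w2 [h12 a1 a2]]; case/lastP: w2 h12 a2 => [|w2 m] h12 a2.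
  by rewrite (shuf_all _ h12) cats0.
have := hn (w1 ++ w2) m; rewrite rcons_cat => /(_ h12).
by move: a2; rewrite all_rcons => /andP [->].
Qed.

Lemma Exp_split (T S : pred 'I_n) w w' : Exp w w' -> (split T S w <-> split T S w').
Proof.
move: {2}(size w') (leqnn (size w')) => N; elim: N w w' => [|N IH] w w'.
  rewrite leqn0 => /nilP -> h; have -> : w = [::] by inversion h.
  by [].
move=> hN hE.
case: (pselect (exists w0 s e, shuf w (rcons w0 (s, e)) /\ S s)) => [[w0 [s [e [hw hs]]]]|hno].
  have [v' [hv hsv]] := Exp_shuf hw hE.
  have := hv; rewrite -cats1 => /Exp_cat_inv [W0 [R' [ev hW0 hR]]].
  have [k [W [eR /Exp_nil_inv eW]]] := Exp_cons_inv hR.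
  rewrite ev eR eW cats0 in hsv.
  have hsz : size w' = (size W0 + k.+1)%N by rewrite (shuf_size hsv) size_cat size_nseq.
  rewrite (split_peel T hw hs).
  have e1 : nseq k.+1 (s, e) = rcons (nseq k (s, e)) (s, e) by rewrite -addn1 nseqD cats1.
  have hsv' : shuf w' (rcons (W0 ++ nseq k (s, e)) (s, e)) by rewrite rcons_cat -e1.
  rewrite (split_peel T hsv' hs).
  case: k {eR e1 hsv hsv'} hsz => [|k] hsz.
    rewrite cats0; apply: IH hW0; by move: hN; rewrite hsz addn1 ltnS.
  have hE' : Exp (rcons w0 (s, e)) (W0 ++ nseq k.+1 (s, e)).
    by rewrite -cats1; apply: Exp_cat hW0 _; have := Exp_cons (s, e) k Exp_nil; rewrite cats0.
  rewrite -(IH _ _ _ hE'); last by move: hN; rewrite hsz size_cat size_nseq addnS ltnS.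
  exact: iff_sym (split_peel T (sh_refl _) hs).
have hnw : forall w0 l, shuf w (rcons w0 l) -> ~~ S l.1.
  move=> w0 [s e] h /=; apply/negP => hs; apply: hno; by exists w0, s, e.
have hnw' : forall w0 l, shuf w' (rcons w0 l) -> ~~ S l.1.
  move=> w0 [s e] h /=; apply/negP => hs.
  have := top_H_rcons w0 (s, e); rewrite -(H_shuf h) /= -(Exp_heq hE (fun t => erefl)).
  by case/top_piece=> w1 hw1; apply: hno; exists w1, s, e.
rewrite (split_noS _ hnw) (split_noS _ hnw') (Exp_all _ hE); by [].
Qed.

Variable M : nat.

Lemma wpow_block (l : letter) f : exists k, wpow l.1 (Nexp M l.2 f) = nseq k.+1 l.
Proof.
case: l => s [].
  rewrite Nexp_true /=; have := expn_gt0 4 (M - 1 - f).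
  by case: (4 ^ _) => // k _; exists k.
by rewrite Nexp_false /=; exists (2 * 4 ^ (M - 1 - f)).-1.
Qed.

Lemma wpow_all s z (P : pred letter) : (forall e, P (s, e)) -> all P (wpow s z).
Proof. by move=> h; case: z => k; rewrite all_nseq h orbT. Qed.

Lemma fval_weq l t1 t2 : weq t1 t2 -> fval adj l t1 = fval adj l t2.
Proof.
move=> h; rewrite /fval; congr nmin; apply: funext => m; apply: propext.
split; case=> x [y [hx hr]]; exists x, y; split => //.
  exact: weq_trans (weq_sym h) hx.
exact: weq_trans h hx.
Qed.

Lemma fval_cons_adj c l t : adj c.1 l.1 -> fval adj l (c :: t) = fval adj l t.
Proof.
move=> hcl; rewrite /fval; congr nmin; apply: funext => m; apply: propext.
split; case=> x [y [hx [[x0 [hx0 ax0]] hy]]].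
  exists ((c.1, ~~ c.2) :: x), y; split; last split => //.
  - have h1 : weq t ([:: (c.1, ~~ c.2); c] ++ t).
      by apply: weq_sym; have := weq_catr t (weq_inv_r c).
    apply: weq_trans h1 _; exact: (weq_catl [:: (c.1, ~~ c.2)] hx).
  - exists ((c.1, ~~ c.2) :: x0); split; first exact: (weq_catl [:: _] hx0).
    by rewrite /= ax0 andbT adj_sym.
exists (c :: x), y; split; last split => //.
- exact: (weq_catl [:: c] hx).
- exists (c :: x0); split; first exact: (weq_catl [:: c] hx0).
  by rewrite /= ax0 andbT adj_sym.
Qed.

Local Notation sigma := (sigma adj M).

Lemma sigma_swap p q a b : adj a.1 b.1 ->
  weq (sigma (p ++ a :: b :: q)) (sigma (p ++ b :: a :: q)).
Proof.
move=> hab; have hba : adj b.1 a.1 by rewrite adj_sym.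
elim: p => [|l p IH] /=.
  have -> : fval adj a (a :: b :: q) = fval adj a (a :: q).
    rewrite (fval_weq _ (shuf_weq (sh_swap [::] q hab))) /=.
    exact: fval_cons_adj.
  have -> : fval adj b (b :: a :: q) = fval adj b (b :: q).
    rewrite (fval_weq _ (shuf_weq (sh_swap [::] q hba))) /=.
    exact: fval_cons_adj.
  rewrite !catA; apply: weq_catr; apply: shuf_weq; apply: shuf_comm.
  apply: wpow_all => e; apply: wpow_all => f /=; exact: hab.
rewrite (fval_weq _ (shuf_weq (sh_swap (l :: p) q hab))).
exact: weq_catl.
Qed.

Lemma sigma_shuf w1 w2 : shuf w1 w2 -> weq (sigma w1) (sigma w2).
Proof.
elim=> [w|w1' w2' w3 _ h1 _ h2|p q a b hab]; first exact: weq_refl.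
  exact: weq_trans h1 h2.
exact: sigma_swap.
Qed.

Fixpoint spre (a c : word) : word :=
  match a with
  | [::] => [::]
  | l :: r => wpow l.1 (Nexp M l.2 (fval adj l (l :: r ++ c))) ++ spre r c
  end.

Lemma sigma_cat a c : sigma (a ++ c) = spre a c ++ sigma c.
Proof. by elim: a => //= l a ->; rewrite catA. Qed.

Lemma Exp_spre a c : Exp a (spre a c).
Proof.
elim: a => [|l a IH] /=; first exact: Exp_nil.
have [k ->] := wpow_block l (fval adj l (l :: a ++ c)).
exact: Exp_cons.
Qed.

Lemma weq_winv w1 w2 : weq w1 w2 -> weq (winv w1) (winv w2).
Proof.
elim=> {w1 w2}.
- move=> w; exact: weq_refl.
- move=> w1 w2 _ h; exact: weq_sym.
- move=> w1 w2 w3 _ h1 _ h2; exact: weq_trans h1 h2.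
- move=> p q w1 w2 _ h; rewrite !winv_cat -?catA; exact: weq_ctx.
- by move=> s e; rewrite /winv /= negbK; exact: weq_free.
- move=> a b e f hab; rewrite /winv /=; apply: weq_comm; by rewrite adj_sym.
Qed.

Lemma weq_cancel w : weq (w ++ winv w) [::].
Proof.
elim: w => [|l w IH]; first exact: weq_refl.
have := weq_ctx [:: l] [:: (l.1, ~~ l.2)] IH; rewrite /= -catA => h.
rewrite winv_cons /=; apply: weq_trans h _.
by case: l => s e; exact: weq_free.
Qed.

Lemma winv_winv (w : word) : winv (winv w) = w.
Proof. by rewrite /winv map_rev revK -map_comp map_id_in // => [[s e]] _ /=; rewrite negbK. Qed.

Lemma all_winv (P : pred 'I_n) (w : word) : all (fun l => P l.1) (winv w) = all (fun l => P l.1) w.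
Proof. by rewrite /winv all_rev all_map. Qed.

Lemma shuf_winv w1 w2 : shuf w1 w2 -> shuf (winv w1) (winv w2).
Proof.
elim=> [w|w1' w2' w3 _ h1 _ h2|p q a b hab]; first exact: sh_refl.
  exact: sh_trans h1 h2.
rewrite !winv_cat !winv_cons /= -!catA /=.
by apply: sh_swap; rewrite /= adj_sym.
Qed.

Lemma decomp x : valid x -> forall ys, geod ys -> exists a b c,
  [/\ shuf x (a ++ c), shuf ys (b ++ c), valid (a ++ winv b) &
      fa (H x) (winv ys) = H (a ++ winv b)].
Proof.
move=> vx; elim=> [_|[s0 e0] ys IH hg].
  exists x, [::], [::]; rewrite !cats0; split => //; exact: sh_refl.
have [a [b [c [hx hy hv hf]]]] := IH (geod_suffix (p := [:: (s0, e0)]) hg).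
rewrite winv_cons fa_cat hf /=.
case: (eqVneq (top (H (a ++ winv b)) s0) (Some e0)) => [htop|htop]; last first.
  exists a, ((s0, e0) :: b), c; split.
  - exact: hx.
  - exact: (shuf_catl [:: _] hy).
  - rewrite winv_cons catA cats1 /valid vf_rcons; apply/andP; split => //.
    by rewrite /= negbK.
  - by rewrite act_push /= ?negbK // winv_cons catA cats1 H_rcons.
rewrite act_pop /= ?negbK //.
case: (top_piece_cat htop) => [[q' hq]|[a' [ha hall]]].
  exfalso.
  have hb : shuf b ((s0, ~~ e0) :: winv q').
    have := shuf_winv hq; rewrite winv_winv -cats1 winv_cat /= => h; exact: h.
  have hw : weq ((s0, e0) :: ys) (winv q' ++ c).
    apply: weq_trans (shuf_weq (shuf_catl [:: (s0, e0)] hy)) _.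
    apply: weq_trans (shuf_weq (shuf_catl [:: (s0, e0)] (shuf_catr c hb))) _.
    exact: (weq_catr (winv q' ++ c) (weq_free adj s0 e0)).
  have := hg _ hw; rewrite /= (shuf_size hy) !size_cat (shuf_size hb) /winv size_rev size_map /=.
  by rewrite size_rev size_map addSn ltnNge leqW.
exists a', b, ((s0, e0) :: c); split.
- by apply: sh_trans hx _; rewrite -cat_rcons; exact: shuf_catr.
- apply: sh_trans (shuf_catl [:: (s0, e0)] hy) _.
  have hall' : all (fun m => adj (s0, e0).1 m.1) b by rewrite /= -(all_winv (adj s0)).
  by have := shuf_catr c (shuf_move hall'); rewrite -catA.
- move: hv; rewrite /valid (vf_shuf (shuf_catr (winv b) ha)).
  rewrite (vf_shuf (_ : shuf _ (rcons (a' ++ winv b) (s0, e0)))); first by rewrite vf_rcons => /andP [].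
  rewrite cat_rcons rcons_cat -cats1; apply: shuf_catl; exact: shuf_move.
- have -> : H (a ++ winv b) = push (s0, e0) (H (a' ++ winv b)).
    rewrite (H_shuf (shuf_catr _ ha)) -H_rcons; apply: H_shuf.
    rewrite cat_rcons rcons_cat -cats1; apply: shuf_catl; exact: shuf_move.
  by have -> := pop_push (s0, e0) (H (a' ++ winv b)).
Qed.

Lemma inZ_weq u w1 w2 : weq w1 w2 -> (inZ adj u w1 <-> inZ adj u w2).
Proof.
move=> h; split; case=> w [hw hw']; exists w; split => //.
  exact: weq_trans (weq_sym h) hw.
exact: weq_trans h hw.
Qed.

Lemma inZZ_weq v u w1 w2 : weq w1 w2 -> (inZZ adj v u w1 <-> inZZ adj v u w2).
Proof.
move=> h; split; case=> g [k [hg [hk hw]]]; exists g, k; split => //; split => //.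
  exact: weq_trans (weq_sym h) hw.
exact: weq_trans h hw.
Qed.

Lemma main_sec (u v : 'I_n) (x y : word) :
  size x = wlen adj x -> size y = wlen adj y ->
  (inZ adj u (x ++ winv y) <-> inZ adj u (sigma x ++ winv (sigma y))) /\
  (inZZ adj v u (x ++ winv y) <-> inZZ adj v u (sigma x ++ winv (sigma y))).
Proof.
move=> hx hy.
have geo : forall w, size w = wlen adj w -> geod w.
  by move=> w hw w' hq; rewrite hw; apply: nmin_le; exists w'.
have vx := geod_valid (geo _ hx).
have [a [b [c [hxs hys hv hf]]]] := decomp vx (geo _ hy).
have hz : weq (x ++ winv y) (a ++ winv b).
  apply: weq_of_pile; rewrite (valid_pile hv) /pileof fa_cat -/(pileof x) (valid_pile vx).
  exact: hf.
have hE : weq (sigma x ++ winv (sigma y)) (spre a c ++ winv (spre b c)).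
  have h1 : weq (sigma x) (spre a c ++ sigma c) by rewrite -sigma_cat; exact: sigma_shuf.
  have h2 : weq (winv (sigma y)) (winv (sigma c) ++ winv (spre b c)).
    by rewrite -winv_cat -sigma_cat; apply: weq_winv; exact: sigma_shuf.
  apply: weq_trans (weq_cat h1 h2) _; rewrite -catA (catA (sigma c)).
  by have := weq_ctx (spre a c) (winv (spre b c)) (weq_cancel (sigma c)).
have hX : Exp (a ++ winv b) (spre a c ++ winv (spre b c)).
  exact: Exp_cat (Exp_spre a c) (Exp_winv (Exp_spre b c)).
have vE := Exp_valid hX hv.
split.
  rewrite (inZ_weq u hz) (inZ_weq u hE) (inZ_all u hv) (inZ_all u vE) (Exp_all _ hX).
  by [].
rewrite (inZZ_weq v u hz) (inZZ_weq v u hE) (inZZ_split v u hv) (inZZ_split v u vE).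
exact: Exp_split hX.
Qed.

End Raag.


Theorem lemma3p5 (n : nat) (adj : rel 'I_n)
  (adj_sym : symmetric adj) (adj_irr : irreflexive adj)
  (M : nat) (HM : 0 < M) (u v : 'I_n) (x y : word n) :
  (* x, y are geodesic words representing elements of B(M) *)
  size x = wlen adj x -> size y = wlen adj y ->
  size x <= M -> size y <= M ->
  (inZ adj u (x ++ winv y) <->
     inZ adj u (sigma adj M x ++ winv (sigma adj M y))) /\
  (inZZ adj v u (x ++ winv y) <->
     inZZ adj v u (sigma adj M x ++ winv (sigma adj M y))).
Proof.
move=> hx hy _ _; exact: (main_sec adj_sym adj_irr M u v hx hy).
Qed.
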